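(* Fix a program in the first-order functional language described in the context. Then for every expression $\pi{:}e$ of the program and every slicing criterion $\sigma$, $$\mathcal S(L(M_\pi^\sigma))\neq\emptyset \iff \mathrm{inSlice}(e,\sigma),$$ where $\mathrm{inSlice}(e,\sigma)$ holds iff $L(A^{\mathrm{comp}}_\pi)\cap\sigma\neq\emptyset$. Here $M_\pi^\sigma$ is the Mohri–Nederhof approximation of the demand grammar $G_\pi^\sigma$ and $A^{\mathrm{comp}}_\pi$ is the completing automaton of $\pi$.
   Context: Programs. A program consists of first-order function definitions $(\mathtt{define}\ (f\ z_1\ \dots\ z_n)\ e_f)$ and a main expression $e_{\mathrm{main}}$, which is treated as the body of a parameterless function $\mathrm{main}$. Programs are in administrative normal form and all variable names are distinct. The grammar is $e ::= (\mathtt{if}\ x\ e_1\ e_2) \mid (\mathtt{let}\ x \leftarrow s\ \mathtt{in}\ e) \mid (\mathtt{return}\ x)$, $s ::= k \mid \mathtt{nil} \mid (\mathtt{cons}\ x_1\ x_2) \mid (\mathtt{car}\ x) \mid (\mathtt{cdr}\ x) \mid (\mathtt{null?}\ x) \mid (+\ x_1\ x_2) \mid (f\ x_1 \dots x_n)$. Every expression, every application and every variable occurrence carries a distinct label $\pi$. Demands. Let $\Sigma=\{0,1,\bar0,\bar1,2\}$. A demand is a set of strings over $\Sigma$. For sets we write $\sigma_1\sigma_2=\{\alpha\beta\}$ and $a\sigma=\{a\alpha\mid\alpha\in\sigma\}$. A slicing criterion is a prefix-closed set of strings over $\{0,1\}$ (given by a regular grammar). Demand analysis. Maps from program points to demands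 are combined by pointwise union. For applications, $\mathcal A(s,\sigma)$ is: - for a constant or $\mathtt{nil}$: $\{\pi\mapsto\sigma\}$; - for $(\mathtt{null?}\ \pi_1{:}x)$: $\{\pi_1\mapsto2\sigma,\pi\mapsto\sigma\}$; - for $(+\ \pi_1{:}x\ \pi_2{:}y)$: $\{\pi_1\mapsto2\sigma,\pi_2\mapsto2\sigma,\pi\mapsto\sigma\}$; - for $(\mathtt{car}\ \pi_1{:}x)$: $\{\pi_1\mapsto2\sigma\cup0\sigma,\pi\mapsto\sigma\}$; - for $(\mathtt{cdr}\ \pi_1{:}x)$: $\{\pi_1\mapsto2\sigma\cup1\sigma,\pi\mapsto\sigma\}$; - for $(\mathtt{cons}\ \pi_1{:}x\ \pi_2{:}y)$: $\{\pi_1\mapsto\bar0\sigma,\pi_2\mapsto\bar1\sigma,\pi\mapsto\sigma\}$; - for $(f\ \pi_1{:}y_1\dots\pi_n{:}y_n)$: $\{\pi_i\mapsto L_f^i\sigma,\pi\mapsto\sigma\}$. For expressions, $\mathcal D$ is: - $\mathcal D(\pi{:}(\mathtt{return}\ \pi_1{:}x),\sigma)=\{\pi_1\mapsto\sigma,\pi\mapsto\sigma\}$; - $\mathcal D(\pi{:}(\mathtt{if}\ \pi_1{:}x\ e_1\ e_2),\sigma)=\mathcal D(e_1,\sigma)\cup\mathcal D(e_2,\sigma)\cup\{\pi_1\mapsto2\sigma,\pi\mapsto\sigma\}$; - $\mathcal D(\pi{:}(\mathtt{let}\ x\leftarrow s\ \mathtt{in}\ e),\sigma)=\mathcal A(s,\bigcup_{\pi'}DE(\pi'))\cup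 DE\cup\{\pi\mapsto\sigma\}$, where $DE=\mathcal D(e,\sigma)$ and $\pi'$ ranges over the occurrences of $x$ in $e$. Summaries and concrete demands. $L_f^i\subseteq\Sigma^*$ satisfies $L_f^i\sigma=\bigcup_{\pi'}\mathcal D(e_f,\sigma)(\pi')$ over occurrences $\pi'$ of the $i$-th parameter in $e_f$, for symbolic $\sigma$. The concrete demands are $\sigma_{\mathrm{main}}=$ the slicing criterion, and $\sigma_f=$ the union of the demands on all call sites of $f$. The demand at $\pi$ in the body of $f$ is $D_\pi=\mathcal D(e_f,\sigma_f)(\pi)$. These equations form a context-free grammar over $\Sigma$ (least solution); $G_\pi^\sigma$ is this grammar with start symbol $D_\pi$. Mohri–Nederhof approximation. Consider each strongly connected component $N'$ of mutually recursive nonterminals whose productions are neither all right-linear nor all left-linear with respect to $N'$. For such a component, add a fresh $A'$ for each $A\in N'$. Replace each production $A\to\alpha_0B_1\alpha_1\cdots B_m\alpha_m$ ($A,B_j\in N'$, the $\alpha_j$ free of $N'$-nonterminals, $m\ge0$) by $A\to\alpha_0B_1,\ B_1'\to\alpha_1B_2,\dots,B_m'\to\alpha_mA'$ (for $m=0$: $A\to\alpha_0A'$), and add $A'\to\epsilon$ for each $A\in N'$. $M_\pi^\sigma$ is the resulting regular grammar/automaton from $G_\pi^\sigma$, with language $L(M_\pi^\sigma)$. Simplification $\mathcal S$ (string-wise from the right, extended to sets by union): - $\mathcal S(\epsilon)=\{\epsilon\}$; - $\mathcal S(0w)=0\mathcal S(w)$ and $\mathcal S(1w)=1\mathcal S(w)$;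 - $\mathcal S(\bar0w)=\{\alpha\mid0\alpha\in\mathcal S(w)\}$ and $\mathcal S(\bar1w)=\{\alpha\mid1\alpha\in\mathcal S(w)\}$; - $\mathcal S(2w)=\emptyset$ if $\mathcal S(w)=\emptyset$, and $\{\epsilon\}$ otherwise. Canonicalization $\mathcal C$ (string-wise from the right, extended by union): - $\mathcal C(\epsilon)=\{\epsilon\}$; - $\mathcal C(0w)=0\mathcal C(w)$, $\mathcal C(1w)=1\mathcal C(w)$, $\mathcal C(2w)=2\mathcal C(w)$; - $\mathcal C(\bar0w)=\{\bar0\mid\mathcal C(w)=\{\epsilon\}\}\cup\{\alpha\mid0\alpha\in\mathcal C(w)\}\cup\{\bar0\bar1\alpha\mid\bar1\alpha\in\mathcal C(w)\}\cup\{\bar0\bar0\alpha\mid\bar0\alpha\in\mathcal C(w)\}$; - $\mathcal C(\bar1w)=\{\bar1\mid\mathcal C(w)=\{\epsilon\}\}\cup\{\alpha\mid1\alpha\in\mathcal C(w)\}\cup\{\bar1\bar1\alpha\mid\bar1\alpha\in\mathcal C(w)\}\cup\{\bar1\bar0\alpha\mid\bar0\alpha\in\mathcal C(w)\}$. $A_\pi$ is an automaton accepting $\mathcal C(L(M_\pi^{\{\epsilon\}}))$. For $p\in\{\bar0,\bar1\}^*$, $\overline{p}$ is the reverse of $p$ with $\bar0\mapsto0$ and $\bar1\mapsto1$. The completing automaton $A^{\mathrm{comp}}_\pi$ is constructed from $A_\pi$ as follows: - take as final states those reachable from the start state by transitions labelled $0,1,2$ only; - reverse every $\bar0$-transition into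 a $0$-transition and every $\bar1$-transition into a $1$-transition, dropping all other transitions; - add a new start state with $\epsilon$-transitions to the old final states. Its language is $L(A^{\mathrm{comp}}_\pi)=\{\overline{p}\mid p\in\{\bar0,\bar1\}^*,\ \exists u\in\{0,1,2\}^*:\ up\in L(A_\pi)\}$. *)

(* Defs.v *)
From mathcomp Require Import all_boot.
From Stdlib Require List.
From Stdlib Require Import Relation_Operators.

Set Implicit Arguments.
Unset Strict Implicit.
Unset Printing Implicit Defensive.

(** * Generic context-free grammars (least-solution semantics)         *)

Section Grammar.
Variables (T N : Type).
Definition grammar := N -> seq (T + N) -> Prop.

Inductive gen (P : grammar) : seq (T + N) -> seq T -> Prop :=
| gen_nil : gen P [::] [::]
| gen_t (t : T) r w : gen P r w -> gen P (inl t :: r) (t :: w)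
| gen_n (A : N) r rhs w1 w2 :
    P A rhs -> gen P rhs w1 -> gen P r w2 -> gen P (inr A :: r) (w1 ++ w2).

Definition lang (P : grammar) (A : N) : seq T -> Prop := gen P [:: inr A].

Definition dep (P : grammar) (A B : N) : Prop :=
  exists rhs, P A rhs /\ List.In (inr B) rhs.

(** mutual recursion = same strongly connected component *)
Definition sameSCC (P : grammar) (A B : N) : Prop :=
  clos_refl_trans N (dep P) A B /\ clos_refl_trans N (dep P) B A.

Definition Nfree (Q : N -> Prop) (alpha : seq (T + N)) : Prop :=
  forall B, List.In (inr B) alpha -> ~ Q B.

Definition rlin (Q : N -> Prop) (rhs : seq (T + N)) : Prop :=
  Nfree Q rhs \/
  exists alpha B, rhs = alpha ++ [:: inr B] /\ Q B /\ Nfree Q alpha.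

Definition llin (Q : N -> Prop) (rhs : seq (T + N)) : Prop :=
  Nfree Q rhs \/
  exists alpha B, rhs = inr B :: alpha /\ Q B /\ Nfree Q alpha.

Definition transformed (P : grammar) (A : N) : Prop :=
  ~ (forall C rhs, sameSCC P A C -> P C rhs -> rlin (sameSCC P A) rhs) /\
  ~ (forall C rhs, sameSCC P A C -> P C rhs -> llin (sameSCC P A) rhs).

(** Mohri--Nederhof: nonterminals [N * bool], [(A,true)] is [A']. *)
Definition liftsym (s : T + N) : T + (N * bool) :=
  match s with inl t => inl t | inr B => inr (B, false) end.

(** [mn_piece Q A H rhs X beta]: processing the remainder [rhs] of a
    production of [A] whose current left-hand side is [H] produces the new
    production [X -> beta]. *)
Inductive mn_piece (Q : N -> Prop) (A : N) :
  N * bool -> seq (T + N) -> N * bool -> seq (T + (N * bool)) -> Prop :=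
| mnp_end H alpha :
    Nfree Q alpha ->
    mn_piece Q A H alpha H (map liftsym alpha ++ [:: inr (A, true)])
| mnp_here H alpha B rest :
    Nfree Q alpha -> Q B ->
    mn_piece Q A H (alpha ++ inr B :: rest) H
             (map liftsym alpha ++ [:: inr (B, false)])
| mnp_later H alpha B rest X beta :
    Nfree Q alpha -> Q B ->
    mn_piece Q A (B, true) rest X beta ->
    mn_piece Q A H (alpha ++ inr B :: rest) X beta.

Definition MN (P : grammar) : N * bool -> seq (T + (N * bool)) -> Prop :=
  fun X beta =>
    (~ transformed P X.1 /\ X.2 = false /\
       exists rhs, P X.1 rhs /\ beta = map liftsym rhs)
    \/ (exists A rhs, transformed P A /\ P A rhs /\
          mn_piece (sameSCC P A) A (A, false) rhs X beta)
    \/ (transformed P X.1 /\ X.2 = true /\ beta = [::]).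

End Grammar.

(** * Demand alphabet, simplification, canonicalization                *)

Inductive dsym := S0 | S1 | S0b | S1b | S2.

Fixpoint Ssimp (w : seq dsym) : seq dsym -> Prop :=
  match w with
  | [::] => fun a => a = [::]
  | S0 :: w' => fun a => exists b, a = S0 :: b /\ Ssimp w' b
  | S1 :: w' => fun a => exists b, a = S1 :: b /\ Ssimp w' b
  | S0b :: w' => fun a => Ssimp w' (S0 :: a)
  | S1b :: w' => fun a => Ssimp w' (S1 :: a)
  | S2 :: w' => fun a => a = [::] /\ exists b, Ssimp w' b
  end.

Fixpoint Ccan (w : seq dsym) : seq dsym -> Prop :=
  match w with
  | [::] => fun a => a = [::]
  | S0 :: w' => fun a => exists b, a = S0 :: b /\ Ccan w' b
  | S1 :: w' => fun a => exists b, a = S1 :: b /\ Ccan w' b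
  | S2 :: w' => fun a => exists b, a = S2 :: b /\ Ccan w' b
  | S0b :: w' => fun a =>
      (a = [:: S0b] /\ (forall b, Ccan w' b <-> b = [::]))
      \/ Ccan w' (S0 :: a)
      \/ (exists b, a = S0b :: S1b :: b /\ Ccan w' (S1b :: b))
      \/ (exists b, a = S0b :: S0b :: b /\ Ccan w' (S0b :: b))
  | S1b :: w' => fun a =>
      (a = [:: S1b] /\ (forall b, Ccan w' b <-> b = [::]))
      \/ Ccan w' (S1 :: a)
      \/ (exists b, a = S1b :: S1b :: b /\ Ccan w' (S1b :: b))
      \/ (exists b, a = S1b :: S0b :: b /\ Ccan w' (S0b :: b))
  end.

Definition liftset (F : seq dsym -> seq dsym -> Prop) (L : seq dsym -> Prop)
  : seq dsym -> Prop := fun a => exists w, L w /\ F w a.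

Definition isbar (s : dsym) : bool :=
  match s with S0b | S1b => true | _ => false end.
Definition isplain (s : dsym) : bool :=
  match s with S0 | S1 | S2 => true | _ => false end.
Definition is01 (s : dsym) : bool :=
  match s with S0 | S1 => true | _ => false end.
Definition unbar (s : dsym) : dsym :=
  match s with S0b => S0 | S1b => S1 | s => s end.
Definition revbar (p : seq dsym) : seq dsym := rev (map unbar p).

(** language of the completing automaton built from an automaton with
    language [L] *)
Definition comp_lang (L : seq dsym -> Prop) : seq dsym -> Prop :=
  fun v => exists p u, all isbar p /\ all isplain u /\ L (u ++ p) /\
                       v = revbar p.

(** * Programs                                                         *)

Definition label := nat.
Definition var := nat.
Definition fname := nat.

Record occ := Occ { olab : label; ovar : var }.

(** applications s (their own label is stored in the enclosing let) *)
Inductive app :=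
| AConst (k : nat)
| ANil
| ACons (x1 x2 : occ)
| ACar (x : occ)
| ACdr (x : occ)
| ANull (x : occ)
| AAdd (x1 x2 : occ)
| ACall (f : fname) (ys : seq occ).

(** expressions; [ELet pi x pis s e] is  pi:(let x <- pis:s in e) *)
Inductive expr :=
| EIf (pi : label) (x : occ) (e1 e2 : expr)
| ELet (pi : label) (x : var) (pis : label) (s : app) (e : expr)
| EReturn (pi : label) (x : occ).

Record fdef := FDef { fd_name : fname; fd_params : seq var; fd_body : expr }.
Record program := Prog { p_defs : seq fdef; p_main : expr }.

Definition app_occs (s : app) : seq occ :=
  match s with
  | AConst _ | ANil => [::]
  | ACons a b | AAdd a b => [:: a; b]
  | ACar a | ACdr a | ANull a => [:: a]
  | ACall _ ys => ys
  end.

Fixpoint labels (e : expr) : seq label :=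
  match e with
  | EIf pi o e1 e2 => pi :: olab o :: labels e1 ++ labels e2
  | ELet pi _ pis s e' => pi :: pis :: map olab (app_occs s) ++ labels e'
  | EReturn pi o => [:: pi; olab o]
  end.

Fixpoint elabels (e : expr) : seq label :=
  match e with
  | EIf pi _ e1 e2 => pi :: elabels e1 ++ elabels e2
  | ELet pi _ _ _ e' => pi :: elabels e'
  | EReturn pi _ => [:: pi]
  end.

Fixpoint binders (e : expr) : seq var :=
  match e with
  | EIf _ _ e1 e2 => binders e1 ++ binders e2
  | ELet _ x _ _ e' => x :: binders e'
  | EReturn _ _ => [::]
  end.

Fixpoint callsites (f : fname) (e : expr) : seq label :=
  match e with
  | EIf _ _ e1 e2 => callsites f e1 ++ callsites f e2
  | ELet _ _ pis s e' =>
      (if s is ACall g _ then (if g == f then [:: pis] else [::]) else [::])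
      ++ callsites f e'
  | EReturn _ _ => [::]
  end.

Definition occ_of (x : var) (o : occ) : seq label :=
  if ovar o == x then [:: olab o] else [::].

Fixpoint occs (x : var) (e : expr) : seq label :=
  match e with
  | EIf _ o e1 e2 => occ_of x o ++ occs x e1 ++ occs x e2
  | ELet _ _ _ s e' => flatten (map (occ_of x) (app_occs s)) ++ occs x e'
  | EReturn _ o => occ_of x o
  end.

Fixpoint scoped (env : seq var) (e : expr) : bool :=
  match e with
  | EIf _ o e1 e2 => (ovar o \in env) && scoped env e1 && scoped env e2
  | ELet _ x _ s e' =>
      all (fun o => ovar o \in env) (app_occs s) && scoped (x :: env) e'
  | EReturn _ o => ovar o \in env
  end.

Fixpoint calls_ok (defs : seq fdef) (e : expr) : bool :=
  match e with
  | EIf _ _ e1 e2 => calls_ok defs e1 && calls_ok defs e2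
  | ELet _ _ _ s e' =>
      (if s is ACall f ys then
         has (fun d => (fd_name d == f) && (size (fd_params d) == size ys)) defs
       else true) && calls_ok defs e'
  | EReturn _ _ => true
  end.

Definition bodies (p : program) : seq expr :=
  p_main p :: map fd_body (p_defs p).

Definition wf_program (p : program) : bool :=
  [&& uniq (flatten (map labels (bodies p))),
      uniq (flatten (map fd_params (p_defs p)) ++
            flatten (map binders (bodies p))),
      uniq (map fd_name (p_defs p)),
      all (calls_ok (p_defs p)) (bodies p),
      scoped [::] (p_main p) &
      all (fun d => scoped (fd_params d) (fd_body d)) (p_defs p)].

Definition expr_labels (p : program) : seq label :=
  flatten (map elabels (bodies p)).

(** * The demand grammar G^sigma                                       *)

(** nonterminals:
    - [NRel pi]  : X_pi with D(e_f, sigma)(pi) = X_pi sigma (relative demand)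
    - [ND pi]    : the demand D_pi = D(e_f, sigma_f)(pi)
    - [NL f i]   : the summary L_f^i
    - [NSig f]   : sigma_f ([None] = main)
    - [NCrit c]  : nonterminals of the slicing-criterion grammar *)
Inductive dnt (CN : Type) :=
| NRel (pi : label)
| ND (pi : label)
| NL (f : fname) (i : nat)
| NSig (f : option fname)
| NCrit (c : CN).
Arguments NRel {CN}. Arguments ND {CN}. Arguments NL {CN}. Arguments NSig {CN}.

Section DemandGrammar.
Variable CN : Type.
Local Notation sym := (dsym + dnt CN)%type.
Local Notation prod := (dnt CN * seq sym)%type.

(** A(s, .) with the demand on the application label [pis] *)
Definition app_prods (pis : label) (s : app) : seq prod :=
  let d : sym := inr (NRel pis) in
  match s with
  | AConst _ | ANil => [::]
  | ACons a b => [:: (NRel (olab a), [:: inl S0b; d]);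
                     (NRel (olab b), [:: inl S1b; d])]
  | ACar a => [:: (NRel (olab a), [:: inl S2; d]);
                  (NRel (olab a), [:: inl S0; d])]
  | ACdr a => [:: (NRel (olab a), [:: inl S2; d]);
                  (NRel (olab a), [:: inl S1; d])]
  | ANull a => [:: (NRel (olab a), [:: inl S2; d])]
  | AAdd a b => [:: (NRel (olab a), [:: inl S2; d]);
                    (NRel (olab b), [:: inl S2; d])]
  | ACall f ys =>
      [seq (NRel (olab iy.2), [:: inr (NL f iy.1); d])
      | iy <- zip (iota 0 (size ys)) ys]
  end.

(** D(e, sigma) relative to the symbolic sigma *)
Fixpoint rel_prods (e : expr) : seq prod :=
  match e with
  | EReturn pi o => [:: (NRel pi, [::]); (NRel (olab o), [::])]
  | EIf pi o e1 e2 =>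
      (NRel pi, [::]) :: (NRel (olab o), [:: inl S2])
        :: rel_prods e1 ++ rel_prods e2
  | ELet pi x pis s e' =>
      (NRel pi, [::])
        :: [seq (NRel pis, [:: (inr (NRel q) : sym)]) | q <- occs x e']
        ++ app_prods pis s ++ rel_prods e'
  end.

(** productions for function [d]: body, summaries L_f^i, D_pi = X_pi sigma_f,
    sigma_f = union of demands on call sites *)
Definition fun_prods (p : program) (d : fdef) : seq prod :=
  rel_prods (fd_body d)
  ++ flatten [seq [seq (NL (fd_name d) iz.1, [:: (inr (NRel q) : sym)])
                  | q <- occs iz.2 (fd_body d)]
             | iz <- zip (iota 0 (size (fd_params d))) (fd_params d)]
  ++ [seq (ND l, [:: inr (NRel l); inr (NSig (Some (fd_name d)))])
     | l <- labels (fd_body d)]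
  ++ [seq (NSig (Some (fd_name d)), [:: (inr (ND c) : sym)])
     | c <- flatten (map (callsites (fd_name d)) (bodies p))].

Definition lift_crit (s : dsym + CN) : sym :=
  match s with inl t => inl t | inr c => inr (NCrit c) end.

(** the demand grammar with slicing criterion given by the regular grammar
    [cps] with start symbol [cs] (sigma_main = criterion) *)
Definition demand_grammar (p : program) (cps : seq (CN * seq (dsym + CN)))
  (cs : CN) : grammar dsym (dnt CN) :=
  fun X r =>
    List.In (X, r)
      (rel_prods (p_main p)
       ++ [seq (ND l, [:: inr (NRel l); inr (NSig None)]) | l <- labels (p_main p)]
       ++ [:: (NSig None, [:: inr (NCrit cs)])]
       ++ flatten (map (fun_prods p) (p_defs p)))
    \/ exists c r', X = NCrit c /\ List.In (c, r') cps /\ r = map lift_crit r'.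

Definition M_lang (p : program) (cps : seq (CN * seq (dsym + CN))) (cs : CN)
  (pi : label) : seq dsym -> Prop :=
  lang (MN (demand_grammar p cps cs)) (ND pi, false).

End DemandGrammar.

Definition crit_grammar (CN : Type) (cps : seq (CN * seq (dsym + CN)))
  : grammar dsym CN := fun A r => List.In (A, r) cps.

Definition crit_lang (CN : Type) (cps : seq (CN * seq (dsym + CN))) (cs : CN)
  : seq dsym -> Prop := lang (crit_grammar cps) cs.

Definition slicing_criterion (CN : Type) (cps : seq (CN * seq (dsym + CN)))
  (cs : CN) : Prop :=
  (forall A r, List.In (A, r) cps ->
     exists w ob, r = map inl w ++ ob /\ all is01 w /\
                  (ob = [::] \/ exists B, ob = [:: inr B]))
  /\ (forall w a, crit_lang cps cs w -> (exists c, w = a ++ c) ->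
                  crit_lang cps cs a).

Definition eps_cps : seq (unit * seq (dsym + unit)) := [:: (tt, [::])].

(** L(A^comp_pi), with A_pi accepting C(L(M_pi^{eps})) *)
Definition Acomp_lang (p : program) (pi : label) : seq dsym -> Prop :=
  comp_lang (liftset Ccan (M_lang p eps_cps tt pi)).

Definition inSlice (p : program) (pi : label) (sigma : seq dsym -> Prop)
  : Prop := exists v, Acomp_lang p pi v /\ sigma v.

(* Main.v *)
Require Import Defs.
From mathcomp Require Import all_boot.
From Stdlib Require Import Classical.
From Stdlib Require List.
From Stdlib Require Import Relation_Operators.

Set Implicit Arguments.
Unset Strict Implicit.
Unset Printing Implicit Defensive.

Lemma In_cat (A : Type) (x : A) (l1 l2 : seq A) :
  List.In x (l1 ++ l2) <-> List.In x l1 \/ List.In x l2.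
Proof.
elim: l1 => [|a l IH] /=; first by split; [right|case].
rewrite IH; tauto.
Qed.

Lemma In_map (A B : Type) (f : A -> B) (y : B) (l : seq A) :
  List.In y (map f l) <-> exists x, y = f x /\ List.In x l.
Proof.
elim: l => [|a l IH] /=; first by split=> [[]|[x [_ []]]].
rewrite IH; split.
- by case=> [<-|[x [-> H]]]; [exists a; auto | exists x; auto].
- by case=> x [-> [<-|H]]; [left | right; exists x].
Qed.

Lemma In_flatten (A : Type) (x : A) (L : seq (seq A)) :
  List.In x (flatten L) -> exists l, List.In l L /\ List.In x l.
Proof.
elim: L => [|l L IH] //= /In_cat [H|/IH [l' [H1 H2]]].
- by exists l; auto.
- by exists l'; auto.
Qed.

Lemma Ccan_uniq w x y : Ccan w x -> Ccan w y -> x = y.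
Proof.
elim: w x y => [|c w IH] x y /=; first by move=> -> ->.
case: c => /=.
- by move=> [b [-> H1]] [b' [-> H2]]; rewrite (IH _ _ H1 H2).
- by move=> [b [-> H1]] [b' [-> H2]]; rewrite (IH _ _ H1 H2).
- move=> Hx Hy.
  case: Hx => [[-> Hx]|[Hx|[[b [-> Hx]]|[b [-> Hx]]]]];
  case: Hy => [[-> Hy]|[Hy|[[b' [-> Hy]]|[b' [-> Hy]]]]] //;
  try (have Hx0 := proj2 (Hx [::]) erefl);
  try (have Hy0 := proj2 (Hy [::]) erefl);
  repeat match goal with
  | H1 : Ccan w ?a, H2 : Ccan w ?b |- _ =>
      have := IH _ _ H1 H2; clear H1; move=> ?
  end; congruence.
- move=> Hx Hy.
  case: Hx => [[-> Hx]|[Hx|[[b [-> Hx]]|[b [-> Hx]]]]];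
  case: Hy => [[-> Hy]|[Hy|[[b' [-> Hy]]|[b' [-> Hy]]]]] //;
  try (have Hx0 := proj2 (Hx [::]) erefl);
  try (have Hy0 := proj2 (Hy [::]) erefl);
  repeat match goal with
  | H1 : Ccan w ?a, H2 : Ccan w ?b |- _ =>
      have := IH _ _ H1 H2; clear H1; move=> ?
  end; congruence.
- by move=> [b [-> H1]] [b' [-> H2]]; rewrite (IH _ _ H1 H2).
Qed.
Lemma Ccan_nil w : Ccan w [::] -> forall b, Ccan w b <-> b = [::].
Proof. by move=> H b; split=> [Hb|->//]; rewrite (Ccan_uniq Hb H). Qed.

Lemma SC_A w s a : Ssimp (w ++ s) a -> exists x, Ccan w x /\ Ssimp (x ++ s) a.
Proof.
elim: w a => [|c w IH] a /=; first by move=> H; exists [::].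
case: c => /=.
- move=> [b [-> /IH [x [H1 H2]]]]; exists (S0 :: x) => /=; split; [by exists x | by exists b].
- move=> [b [-> /IH [x [H1 H2]]]]; exists (S1 :: x) => /=; split; [by exists x | by exists b].
- move=> /IH [x [H1 H2]]; case: x H1 H2 => [|d x] H1 H2.
  + exists [:: S0b]; split => //; left; split => //; exact: Ccan_nil.
  + case: d H1 H2 => H1 H2 /=.
    * exists x; split; first by right; left.
      by case: H2 => b [[<-] H].
    * by case: H2 => b [].
    * exists [:: S0b, S0b & x]; split => //; right; right; right; exists x; auto.
    * exists [:: S0b, S1b & x]; split => //; right; right; left; exists x; auto.
    * by case: H2.
- move=> /IH [x [H1 H2]]; case: x H1 H2 => [|d x] H1 H2.
  + exists [:: S1b]; split => //; left; split => //; exact: Ccan_nil.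
  + case: d H1 H2 => H1 H2 /=.
    * by case: H2 => b [].
    * exists x; split; first by right; left.
      by case: H2 => b [[<-] H].
    * exists [:: S1b, S0b & x]; split => //; right; right; right; exists x; auto.
    * exists [:: S1b, S1b & x]; split => //; right; right; left; exists x; auto.
    * by case: H2.
- move=> [-> [b /IH [x [H1 H2]]]]; exists (S2 :: x) => /=; split.
  + by exists x.
  + by split => //; exists b.
Qed.

Lemma SC_B w x s a : Ccan w x -> Ssimp (x ++ s) a -> Ssimp (w ++ s) a.
Proof.
elim: w x a => [|c w IH] x a /=; first by move=> ->.
case: c => /=.
- move=> [b [-> H]] /= [a' [-> H']]; exists a'; split => //; exact: IH H H'.
- move=> [b [-> H]] /= [a' [-> H']]; exists a'; split => //; exact: IH H H'.
- case=> [[-> H]|[H|[[b [-> H]]|[b [-> H]]]]] /= Hs.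
  + by apply: (IH [::]) => //; apply/H.
  + by apply: (IH _ _ H) => /=; exists a.
  + exact: (IH _ _ H).
  + exact: (IH _ _ H).
- case=> [[-> H]|[H|[[b [-> H]]|[b [-> H]]]]] /= Hs.
  + by apply: (IH [::]) => //; apply/H.
  + by apply: (IH _ _ H) => /=; exists a.
  + exact: (IH _ _ H).
  + exact: (IH _ _ H).
- move=> [b [-> H]] /= [-> [a' H']]; split => //; exists a'; exact: IH H H'.
Qed.

Lemma Ccan_form w x : Ccan w x ->
  exists u p, x = u ++ p /\ all isplain u /\ all isbar p.
Proof.
elim: w x => [|c w IH] x /=; first by move=> ->; exists [::], [::].
case: c => /=.
- by move=> [b [-> /IH [u [p [-> [Hu Hp]]]]]]; exists (S0 :: u), p.
- by move=> [b [-> /IH [u [p [-> [Hu Hp]]]]]]; exists (S1 :: u), p.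
- case=> [[-> H]|[/IH [u [p [E [Hu Hp]]]]|[[b [-> /IH [u [p [E [Hu Hp]]]]]]|[b [-> /IH [u [p [E [Hu Hp]]]]]]]]].
  + by exists [::], [:: S0b].
  + case: u E Hu => [|d u] /= E Hu; first by rewrite -E in Hp.
    case: E => Hd ->; subst d; exists u, p; by case/andP: Hu.
  + case: u E Hu => [|d u] /= E Hu; last by case: E Hu => <-.
    by rewrite E; exists [::], (S0b :: p).
  + case: u E Hu => [|d u] /= E Hu; last by case: E Hu => <-.
    by rewrite E; exists [::], (S0b :: p).
- case=> [[-> H]|[/IH [u [p [E [Hu Hp]]]]|[[b [-> /IH [u [p [E [Hu Hp]]]]]]|[b [-> /IH [u [p [E [Hu Hp]]]]]]]]].
  + by exists [::], [:: S1b].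
  + case: u E Hu => [|d u] /= E Hu; first by rewrite -E in Hp.
    case: E => Hd ->; subst d; exists u, p; by case/andP: Hu.
  + case: u E Hu => [|d u] /= E Hu; last by case: E Hu => <-.
    by rewrite E; exists [::], (S1b :: p).
  + case: u E Hu => [|d u] /= E Hu; last by case: E Hu => <-.
    by rewrite E; exists [::], (S1b :: p).
- by move=> [b [-> /IH [u [p [-> [Hu Hp]]]]]]; exists (S2 :: u), p.
Qed.

Lemma Ssimp01 s a : all is01 s -> Ssimp s a <-> a = s.
Proof.
elim: s a => [|c s IH] a /=; first by [].
case: c => //= /IH H.
- by split => [[b [-> /H ->]]|->]; [|exists s; split => //; apply/H].
- by split => [[b [-> /H ->]]|->]; [|exists s; split => //; apply/H].
Qed.

Lemma Ssimp_bar p s a : all isbar p -> all is01 s ->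
  Ssimp (p ++ s) a <-> s = revbar p ++ a.
Proof.
rewrite /revbar.
elim: p a => [|c p IH] a /= Hp Hs; first by rewrite Ssimp01 //; split => ->.
case: c Hp => //= Hp; rewrite IH // rev_cons -cats1 -catA //.
Qed.

Lemma Ssimp_plain u t : all isplain u ->
  (exists a, Ssimp (u ++ t) a) <-> (exists a, Ssimp t a).
Proof.
elim: u => [|c u IH] //= /andP [Hc Hu].
case: c Hc => //= _.
- split => [[a [b [_ Hb]]]|/(IH Hu) [b Hb]]; first by apply/(IH Hu); exists b.
  by exists (S0 :: b), b.
- split => [[a [b [_ Hb]]]|/(IH Hu) [b Hb]]; first by apply/(IH Hu); exists b.
  by exists (S1 :: b), b.
- split => [[a [_ [b Hb]]]|/(IH Hu) [b Hb]]; first by apply/(IH Hu); exists b.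
  by exists [::]; split => //; exists b.
Qed.
Lemma gen_nil_inv (T N : Type) (P : grammar T N) w : gen P [::] w -> w = [::].
Proof. by move=> H; inversion H. Qed.

Lemma gen1_inv (T N : Type) (P : grammar T N) X w :
  gen P [:: inr X] w -> exists rhs, P X rhs /\ gen P rhs w.
Proof.
move=> H; inversion H; subst.
exists rhs; split => //; by move/gen_nil_inv: H5 => ->; rewrite cats0.
Qed.

Lemma gen1 (T N : Type) (P : grammar T N) X rhs w :
  P X rhs -> gen P rhs w -> gen P [:: inr X] w.
Proof. by move=> H1 H2; rewrite -(cats0 w); apply: gen_n H1 H2 (gen_nil _). Qed.

Lemma gen_cons1 (T N : Type) (P : grammar T N) X r w1 w2 :
  gen P [:: inr X] w1 -> gen P r w2 -> gen P (inr X :: r) (w1 ++ w2).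
Proof. move=> Ha Hr; have [rhs [H1 H2]] := gen1_inv Ha; exact: gen_n H1 H2 Hr. Qed.

Lemma piece_out (T N : Type) (Q : N -> Prop) A H rhs X (beta : seq (T + (N * bool))) :
  mn_piece Q A H rhs X beta -> X = H \/ Q X.1.
Proof.
move=> Hp; induction Hp; [by left|by left|].
case: IHHp => [-> | ?]; right => //=.
Qed.

Lemma piece_nts (T N : Type) (Q : N -> Prop) A H (rhs : seq (T + N)) X beta :
  mn_piece Q A H rhs X beta ->
  forall Y, List.In (inr Y) beta -> Y.1 = A \/ List.In (inr Y.1) rhs.
Proof.
move=> Hp; induction Hp.
- move=> Y /In_cat [/In_map [s [E Hs]]|[E|[]]].
  + by case: s E Hs => // B [->] /= Hs; right.
  + by case: E => <-; left.
- move=> Y /In_cat [/In_map [s [E Hs]]|[E|[]]].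
  + by case: s E Hs => // C [->] /= Hs; right; apply/In_cat; left.
  + by case: E => <- /=; right; apply/In_cat; right; left.
- move=> Y /IHHp [->|HY]; first by left.
  by right; apply/In_cat; right; right.
Qed.

Definition smap (T N1 N2 : Type) (f : N1 -> N2) (s : T + N1) : T + N2 :=
  match s with inl t => inl t | inr B => inr (f B) end.
Definition pmap (N1 N2 : Type) (f : N1 -> N2) (X : N1 * bool) : N2 * bool :=
  (f X.1, X.2).

Record sim (T N1 N2 : Type) (P1 : grammar T N1) (P2 : grammar T N2)
  (f : N1 -> N2) (g : N2 -> N1) (R1 : N1 -> Prop) (R2 : N2 -> Prop) : Prop :=
  { sim_R1 : forall A, R1 A -> R2 (f A) /\ g (f A) = A;
    sim_R2 : forall A, R2 A -> R1 (g A) /\ f (g A) = A;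
    sim_P1 : forall A rhs, R1 A -> P1 A rhs ->
       P2 (f A) (map (smap f) rhs) /\ (forall B, List.In (inr B) rhs -> R1 B);
    sim_P2 : forall A rhs, R2 A -> P2 A rhs ->
       P1 (g A) (map (smap g) rhs) /\ (forall B, List.In (inr B) rhs -> R2 B) }.

Lemma sim_sym T N1 N2 P1 P2 f g R1 R2 :
  @sim T N1 N2 P1 P2 f g R1 R2 -> sim P2 P1 g f R2 R1.
Proof. by case=> *; split. Qed.

Section Sim.
Variables (T N1 N2 : Type) (P1 : grammar T N1) (P2 : grammar T N2)
  (f : N1 -> N2) (g : N2 -> N1) (R1 : N1 -> Prop) (R2 : N2 -> Prop).
Hypothesis S : sim P1 P2 f g R1 R2.

Lemma crt_fwd A C : R1 A -> clos_refl_trans N1 (dep P1) A C ->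
  R1 C /\ clos_refl_trans N2 (dep P2) (f A) (f C).
Proof.
move=> HA H; move: H HA; elim => {A C}.
- move=> x y [rhs [Hr Hy]] Hx.
  have [H1 H2] := sim_P1 S Hx Hr.
  split; first exact: H2.
  apply: rt_step; exists (map (smap f) rhs); split => //.
  by apply/In_map; exists (inr y).
- by move=> x Hx; split => //; apply: rt_refl.
- move=> x y z _ IH1 _ IH2 Hx.
  have [Hy H1] := IH1 Hx; have [Hz H2] := IH2 Hy.
  by split => //; apply: rt_trans H1 H2.
Qed.

Lemma scc_fwd A C : R1 A -> sameSCC P1 A C -> R1 C /\ sameSCC P2 (f A) (f C).
Proof.
move=> HA [H1 H2]; have [HC H1'] := crt_fwd HA H1.
have [_ H2'] := crt_fwd HC H2; by split => //; split.
Qed.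
End Sim.
Lemma smap_inr (T N1 N2 : Type) (f : N1 -> N2) (s : T + N1) B2 :
  smap f s = inr B2 -> exists B, s = inr B /\ B2 = f B.
Proof. by case: s => //= B [<-]; exists B. Qed.

Lemma map_liftsym (T N1 N2 : Type) (f : N1 -> N2) (rhs : seq (T + N1)) :
  map (smap (pmap f)) (map (@liftsym T N1) rhs) = map (@liftsym T N2) (map (smap f) rhs).
Proof. by rewrite -!map_comp; apply: eq_map; case. Qed.

Section Sim2.
Variables (T N1 N2 : Type) (P1 : grammar T N1) (P2 : grammar T N2)
  (f : N1 -> N2) (g : N2 -> N1) (R1 : N1 -> Prop) (R2 : N2 -> Prop).
Hypothesis S : sim P1 P2 f g R1 R2.

Lemma scc_bwd A C : R1 A -> R1 C -> sameSCC P2 (f A) (f C) -> sameSCC P1 A C.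
Proof.
move=> HA HC H.
have [HA2 gA] := sim_R1 S HA; have [HC2 gC] := sim_R1 S HC.
by have [_ H'] := scc_fwd (sim_sym S) HA2 H; rewrite gA gC in H'.
Qed.

Lemma Nfree_bwd A (alpha : seq (T + N1)) : R1 A ->
  Nfree (sameSCC P2 (f A)) (map (smap f) alpha) -> Nfree (sameSCC P1 A) alpha.
Proof.
move=> HA Hn B HB HQ.
have [_ H2] := scc_fwd S HA HQ.
apply: (Hn (f B)) H2; apply/In_map; by exists (inr B).
Qed.

Lemma Nfree_fwd A (alpha : seq (T + N1)) : R1 A -> (forall B, List.In (inr B) alpha -> R1 B) ->
  Nfree (sameSCC P1 A) alpha -> Nfree (sameSCC P2 (f A)) (map (smap f) alpha).
Proof.
move=> HA Hr Hn B2 /In_map [s [E Hs]] HQ.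
have [B [Es EB]] := smap_inr (esym E); subst s B2.
exact: (Hn B Hs (scc_bwd HA (Hr B Hs) HQ)).
Qed.

Lemma rlin_bwd A (rhs : seq (T + N1)) : R1 A -> (forall B, List.In (inr B) rhs -> R1 B) ->
  rlin (sameSCC P2 (f A)) (map (smap f) rhs) -> rlin (sameSCC P1 A) rhs.
Proof.
move=> HA Hr [Hn|[alpha2 [B2 [E [HQ Hn]]]]]; first by left; apply: Nfree_bwd Hn.
right; case/lastP: rhs Hr E => [|rhs x] Hr E; first by case: alpha2 E Hn.
rewrite -cats1 map_cat /= in E.
have := E; rewrite !cats1 => /rcons_inj [Ea Ex].
have [B [Ex' EB]] := smap_inr Ex; subst x B2.
have HrB : R1 B by apply: Hr; rewrite -cats1; apply/In_cat; right; left.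
exists rhs, B; split; first by rewrite cats1.
split; first exact: scc_bwd HA HrB HQ.
by apply: Nfree_bwd HA _; rewrite Ea.
Qed.

Lemma llin_bwd A (rhs : seq (T + N1)) : R1 A -> (forall B, List.In (inr B) rhs -> R1 B) ->
  llin (sameSCC P2 (f A)) (map (smap f) rhs) -> llin (sameSCC P1 A) rhs.
Proof.
move=> HA Hr [Hn|[alpha2 [B2 [E [HQ Hn]]]]]; first by left; apply: Nfree_bwd Hn.
right; case: rhs Hr E => [|x rhs] Hr //= [Ex Ea].
have [B [Ex' EB]] := smap_inr Ex; subst x B2.
have HrB : R1 B by apply: Hr; left.
exists rhs, B; split => //.
split; first exact: scc_bwd HA HrB HQ.
by apply: Nfree_bwd HA _; rewrite Ea.
Qed.

Lemma trans_fwd A : R1 A -> transformed P1 A -> transformed P2 (f A).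
Proof.
move=> HA [Hr Hl]; split => [Hr2|Hl2]; [apply: Hr|apply: Hl] => C rhs Hs HP;
have [HC Hs2] := scc_fwd S HA Hs; have [HP2 Hreg] := sim_P1 S HC HP.
- by apply: rlin_bwd => //; exact: Hr2 Hs2 HP2.
- by apply: llin_bwd => //; exact: Hl2 Hs2 HP2.
Qed.
End Sim2.

Section Sim3.
Variables (T N1 N2 : Type) (P1 : grammar T N1) (P2 : grammar T N2)
  (f : N1 -> N2) (g : N2 -> N1) (R1 : N1 -> Prop) (R2 : N2 -> Prop).
Hypothesis S : sim P1 P2 f g R1 R2.

Lemma trans_bwd A : R1 A -> transformed P2 (f A) -> transformed P1 A.
Proof.
move=> HA H; have [HA2 gA] := sim_R1 S HA.
by have := trans_fwd (sim_sym S) HA2 H; rewrite gA.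
Qed.

Lemma piece_fwd A H (rhs : seq (T + N1)) X beta : R1 A ->
  mn_piece (sameSCC P1 A) A H rhs X beta ->
  (forall B, List.In (inr B) rhs -> R1 B) ->
  mn_piece (sameSCC P2 (f A)) (f A) (pmap f H) (map (smap f) rhs) (pmap f X)
           (map (smap (pmap f)) beta).
Proof.
move=> HA Hp; induction Hp => Hr.
- rewrite map_cat map_liftsym /=; apply: mnp_end.
  exact: (Nfree_fwd S).
- rewrite map_cat /= map_cat map_liftsym /=; apply: mnp_here.
  + apply: (Nfree_fwd S) => // C HC; apply: Hr; apply/In_cat; by left.
  + have HB : R1 B by apply: Hr; apply/In_cat; right; left.
    by have [_ ] := scc_fwd S HA H1.
- rewrite map_cat /=; apply: mnp_later.
  + apply: (Nfree_fwd S) => // C HC; apply: Hr; apply/In_cat; by left.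
  + by have [_ ] := scc_fwd S HA H1.
  + apply: IHHp => C HC; apply: Hr; apply/In_cat; right; by right.
Qed.

Lemma MN_fwd X beta : R1 X.1 -> MN P1 X beta ->
  MN P2 (pmap f X) (map (smap (pmap f)) beta) /\
  (forall Y, List.In (inr Y) beta -> R1 Y.1).
Proof.
move=> HX [[Hnt [Hb [rhs [HP ->]]]] | [[A' [rhs [Ht [HP Hp]]]] | [Ht [Hb ->]]]].
- have [HP2 Hreg] := sim_P1 S HX HP.
  split.
  + left; split; first by move=> H; apply: Hnt; apply: trans_bwd H.
    split => //; exists (map (smap f) rhs); split => //; exact: map_liftsym.
  + move=> Y /In_map [s [E Hs]]; case: s E Hs => // B [->] /= Hs; exact: Hreg.
- have HA' : R1 A'.
    case: (piece_out Hp) => [E|[_ Hc]]; first by rewrite E in HX.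
    by have [] := crt_fwd S HX Hc.
  have [HP2 Hreg] := sim_P1 S HA' HP.
  split.
  + right; left; exists (f A'), (map (smap f) rhs); split; first exact (trans_fwd S HA' Ht).
    split => //; exact: (piece_fwd HA' Hp Hreg).
  + move=> Y HY; case: (piece_nts Hp HY) => [-> //|]; exact: Hreg.
- split => //; right; right; split; first exact (trans_fwd S HX Ht).
  by split.
Qed.

Lemma gen_fwd beta w : gen (MN P1) beta w ->
  (forall Y, List.In (inr Y) beta -> R1 Y.1) ->
  gen (MN P2) (map (smap (pmap f)) beta) w.
Proof.
move=> Hg; induction Hg => Hr /=.
- exact: gen_nil.
- apply: gen_t; apply: IHHg => Y HY; apply: Hr; by right.
- have HA : R1 A.1 by apply: Hr; left.
  have [HM Hreg] := MN_fwd HA H.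
  apply: gen_n HM (IHHg1 Hreg) _; apply: IHHg2 => Y HY; apply: Hr; by right.
Qed.
End Sim3.

Lemma lang_equiv T N1 N2 P1 P2 f g R1 R2 (S : @sim T N1 N2 P1 P2 f g R1 R2) A b w :
  R1 A -> (lang (MN P1) (A, b) w <-> lang (MN P2) (f A, b) w).
Proof.
move=> HA; have [HA2 gA] := sim_R1 S HA; split => H.
- by have := gen_fwd S H; apply => Y [[<-]|[]].
- have := gen_fwd (sim_sym S) H; rewrite /pmap /= gA; by apply => Y [[<-]|[]].
Qed.
Definition hN (C1 C2 : Type) (k : C1 -> C2) (X : dnt C1) : dnt C2 :=
  match X with
  | NRel l => NRel l | ND l => ND l | NL f i => NL f i | NSig f => NSig f
  | NCrit c => NCrit (k c) end.

Definition hP (C1 C2 : Type) (k : C1 -> C2) (x : dnt C1 * seq (dsym + dnt C1)) :=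
  (hN k x.1, map (smap (hN k)) x.2).

Definition plist (CN : Type) (p : program) (cs : CN) :=
      (rel_prods CN (p_main p)
       ++ [seq (ND l, [:: inr (NRel l); inr (NSig None)]) | l <- labels (p_main p)]
       ++ [:: (NSig None, [:: inr (NCrit cs)])]
       ++ flatten (map (fun_prods CN p) (p_defs p))).

Lemma dg_eq (CN : Type) p (cps : seq (CN * seq (dsym + CN))) cs X r :
  demand_grammar p cps cs X r <->
  List.In (X, r) (plist p cs) \/
  exists c r', X = NCrit c /\ List.In (c, r') cps /\ r = map (@lift_crit CN) r'.
Proof. by []. Qed.

Section Maps.
Variables (C1 C2 : Type) (k : C1 -> C2).

Lemma map_app_prods pis s :
  map (hP k) (app_prods C1 pis s) = app_prods C2 pis s.
Proof. case: s => //= f ys; rewrite -map_comp; by apply: eq_map; case. Qed.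

Lemma map_rel_prods e : map (hP k) (rel_prods C1 e) = rel_prods C2 e.
Proof.
elim: e => [pi o e1 IH1 e2 IH2|pi x pis s e IH|pi o] //=.
- by rewrite map_cat IH1 IH2.
- by rewrite !map_cat IH map_app_prods -map_comp.
Qed.

Lemma map_fun_prods p d : map (hP k) (fun_prods C1 p d) = fun_prods C2 p d.
Proof.
rewrite /fun_prods !map_cat map_rel_prods map_flatten -!map_comp.
congr (_ ++ _ ++ _ ++ _).
congr flatten; apply: eq_map => iz /=; rewrite -map_comp //.
Qed.

Lemma map_plist p (cs : C1) : map (hP k) (plist p cs) = plist p (k cs).
Proof.
rewrite /plist !map_cat map_rel_prods -!map_comp map_flatten -map_comp.
congr (_ ++ _ ++ _ ++ _).
by congr flatten; apply: eq_map => d /=; rewrite map_fun_prods.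
Qed.
End Maps.
Definition isreg (CN : Type) (X : dnt CN) : bool :=
  match X with NRel _ | NL _ _ => true | _ => false end.

Definition shape (CN : Type) (cs : CN) (X : dnt CN) (r : seq (dsym + dnt CN)) : Prop :=
  match X with
  | NRel _ | NL _ _ => forall B, List.In (inr B) r -> isreg B
  | ND c => exists g, r = [:: inr (NRel c); inr (NSig g)]
  | NSig f => (exists c, r = [:: inr (ND c)]) \/ (f = None /\ r = [:: inr (NCrit cs)])
  | NCrit _ => False
  end.

Ltac crush := repeat match goal with
 | H : List.In _ (_ ++ _) |- _ => apply In_cat in H; destruct H
 | H : List.In _ (map _ _) |- _ => apply In_map in H; destruct H as [? [? ?]]
 | H : List.In _ (flatten _) |- _ => apply In_flatten in H; destruct H as [? [? ?]]
 | H : List.In _ (_ :: _) |- _ => destruct H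
 | H : List.In _ [::] |- _ => destruct H
 | H : _ \/ _ |- _ => destruct H
 | H : False |- _ => destruct H
 | H : (_, _) = (_, _) |- _ => injection H; clear H; intros; subst
 | H : (_, _) = ?x |- _ => simpl in H
 | H : ?x = (_, _) |- _ => simpl in H
 | H : inr _ = inr _ |- _ => injection H; clear H; intros; subst
 | H : ?x = _ |- _ => is_var x; subst x
 end.

Lemma shape_app (CN : Type) pis s (X : dnt CN) r :
  List.In (X, r) (app_prods CN pis s) ->
  (exists l, X = NRel l) /\ forall B, List.In (inr B) r -> isreg B.
Proof.
case: s => [k|||||||f ys] /=; intros; crush; split; try (eexists; reflexivity); move=> B HB; crush => //.
Qed.
Lemma shape_rel (CN : Type) e (X : dnt CN) r :
  List.In (X, r) (rel_prods CN e) ->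
  (exists l, X = NRel l) /\ forall B, List.In (inr B) r -> isreg B.
Proof.
elim: e X r => [pi o e1 IH1 e2 IH2|pi x pis s e IH|pi o] X r /= H; crush;
  try (by apply: IH1); try (by apply: IH2); try (by apply: IH);
  try (by apply: shape_app; eassumption);
  split; try (eexists; reflexivity); move=> B HB; crush => //.
Qed.

Lemma shape_fun (CN : Type) (cs : CN) p d (X : dnt CN) r :
  List.In (X, r) (fun_prods CN p d) -> shape cs X r.
Proof.
rewrite /fun_prods => H; crush.
- have [[l ->] H'] := shape_rel H; exact: H'.
- by move=> B HB; crush.
- by exists (Some (fd_name d)).
- by left; eexists.
Qed.

Lemma shape_plist (CN : Type) p (cs : CN) (X : dnt CN) r :
  List.In (X, r) (plist p cs) -> shape cs X r.
Proof.
rewrite /plist => H; crush.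
- have [[l ->] H'] := shape_rel H; exact: H'.
- by exists None.
- by right.
- exact: shape_fun H0.
Qed.
Definition critshape (CN : Type) (cps : seq (CN * seq (dsym + CN))) : Prop :=
  forall A r, List.In (A, r) cps ->
     exists w ob, r = map inl w ++ ob /\ all is01 w /\
                  (ob = [::] \/ exists B, ob = [:: inr B]).

Lemma rlin_snoc (T N : Type) (Q : N -> Prop) (alpha : seq (T + N)) B :
  Nfree Q alpha -> rlin Q (alpha ++ [:: inr B]).
Proof.
move=> Hn; case: (classic (Q B)) => HB.
- by right; exists alpha, B.
- left => C /In_cat [/Hn //|[[<-]|[]] //].
Qed.

Lemma Nfree_inl (T N : Type) (Q : N -> Prop) (w : seq T) :
  Nfree Q (map inl w).
Proof. by move=> B /In_map [t [E _]]. Qed.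

Lemma map_lift_inl (CN : Type) (w : seq dsym) :
  map (@lift_crit CN) (map inl w) = map inl w.
Proof. by elim: w => //= t w ->. Qed.

Lemma dg_map (C1 C2 : Type) (k : C1 -> C2) p (cps1 : seq (C1 * seq (dsym + C1)))
  (cs1 : C1) (cps2 : seq (C2 * seq (dsym + C2))) X rhs :
  (forall c, X <> NCrit c) -> demand_grammar p cps1 cs1 X rhs ->
  demand_grammar p cps2 (k cs1) (hN k X) (map (smap (hN k)) rhs).
Proof.
move=> HX [H|[c [r' [E _]]]]; last by case: (HX c).
left; change (List.In (hN k X, map (smap (hN k)) rhs) (plist p (k cs1))).
rewrite -map_plist; apply/In_map; by exists (X, rhs).
Qed.

Section DG.
Variables (p : program) (CN : Type) (cps : seq (CN * seq (dsym + CN))) (cs : CN).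
Hypothesis Hcs : critshape cps.
Notation G := (demand_grammar p cps cs).

Lemma G_shape X r : G X r ->
  match X with
  | NCrit c => exists r', List.In (c, r') cps /\ r = map (@lift_crit CN) r'
  | _ => shape cs X r end.
Proof.
case=> [H|[c [r' [-> [H1 H2]]]]]; last by exists r'.
have := shape_plist H; by case: X H.
Qed.

Lemma reg_closed A B rhs : isreg A -> G A rhs -> List.In (inr B) rhs -> isreg B.
Proof. by move=> HA /G_shape; case: A HA => //= *; auto. Qed.

Lemma crt_reg A B : isreg A -> clos_refl_trans _ (dep G) A B -> isreg B.
Proof.
move=> HA H; move: H HA; elim => {A B} //.
- move=> x y [rhs [H1 H2]] Hx; exact: reg_closed Hx H1 H2.
- by move=> x y z _ IH1 _ IH2 /IH1 /IH2.
Qed.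

Lemma nontrans X : ~~ isreg X -> ~ transformed G X.
Proof.
move=> HX [Hr _]; apply: Hr => C rhs [Hs1 Hs2] HG.
have HC : ~~ isreg C by apply/negP => HC; move/negP: HX; apply; exact: crt_reg HC Hs2.
have Hnq : forall B, isreg B -> ~ sameSCC G X B.
  by move=> B HB [_ H]; move/negP: HX; apply; exact: crt_reg HB H.
move/G_shape: HG; clear Hs1 Hs2; case: C HC => //=.
- move=> l _ [g ->]; apply: (@rlin_snoc _ _ _ [:: inr (NRel l)]).
  by move=> B [[<-]|[]]; apply: Hnq.
- move=> f _ [[c ->]|[_ ->]]; exact: (@rlin_snoc _ _ _ [::]).
- move=> c _ [r' [/Hcs [w [ob [-> [_ Hob]]]] ->]].
  rewrite map_cat map_lift_inl.
  case: Hob => [->|[B ->]] /=.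
  + by rewrite cats0; left; apply: Nfree_inl.
  + apply: rlin_snoc; exact: Nfree_inl.
Qed.

Lemma MN_nonreg X b beta : ~~ isreg X -> MN G (X, b) beta ->
  b = false /\ exists rhs, G X rhs /\ beta = map (@liftsym _ _) rhs.
Proof.
move=> HX [[_ [Hb H]]|[[A' [rhs [Ht [HP Hp]]]]|[Ht _]]] //.
- exfalso; case: (piece_out Hp) => [[E _]|[H1 _]].
  + by subst; apply: (nontrans HX).
  + apply: (@nontrans A') Ht; apply/negP => HA; move/negP: HX; apply.
    exact: crt_reg HA H1.
- by case: (nontrans HX).
Qed.

Lemma MN_nonreg_intro X rhs : ~~ isreg X -> G X rhs ->
  MN G (X, false) (map (@liftsym _ _) rhs).
Proof. move=> HX HG; left; split; first exact: nontrans. by split => //; exists rhs. Qed.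

Definition lc (s : dsym + CN) : dsym + (dnt CN * bool) := liftsym (lift_crit s).

Lemma crit_fwd beta w : gen (MN G) beta w ->
  forall r, beta = map lc r -> gen (crit_grammar cps) r w.
Proof.
move=> Hg; induction Hg => r0 E.
- by case: r0 E => // _; apply: gen_nil.
- case: r0 E => [|[t'|c] r0] //= [<- E]; apply: gen_t; exact: IHHg.
- case: r0 E => [|[t'|c] r0] //= [EA E]; subst A.
  have [_ [rhs0 [HG E2]]] := MN_nonreg (X := NCrit c) is_true_true H; subst rhs.
  have [r' [Hin E3]] := G_shape HG; subst rhs0.
  apply: gen_n Hin (IHHg1 _ _) (IHHg2 _ E).
  by rewrite -map_comp.
Qed.

Lemma crit_bwd r w : gen (crit_grammar cps) r w -> gen (MN G) (map lc r) w.
Proof.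
move=> Hg; induction Hg => /=.
- exact: gen_nil.
- exact: gen_t.
- apply: gen_n IHHg2; last exact: IHHg1.
  rewrite /lc map_comp; apply: MN_nonreg_intro => //.
  by right; exists A, rhs.
Qed.

Lemma crit_equiv c w : lang (MN G) (NCrit c, false) w <-> crit_lang cps c w.
Proof.
split => H; first exact: (crit_fwd H (r := [:: inr c])).
exact: (crit_bwd H).
Qed.
End DG.
Lemma sim_dg p (C1 C2 : Type) (k : C1 -> C2) (k' : C2 -> C1)
  (cps1 : seq (C1 * seq (dsym + C1))) (cs1 : C1)
  (cps2 : seq (C2 * seq (dsym + C2))) (cs2 : C2) :
  k cs1 = cs2 -> k' cs2 = cs1 ->
  sim (demand_grammar p cps1 cs1) (demand_grammar p cps2 cs2)
      (hN k) (hN k') (fun X => isreg X) (fun X => isreg X).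
Proof.
move=> E1 E2; split.
- by case.
- by case.
- move=> A rhs HA HG; split.
  + rewrite -E1; apply: dg_map HG; by case: A HA.
  + move=> B HB; exact: reg_closed HA HG HB.
- move=> A rhs HA HG; split.
  + rewrite -E2; apply: dg_map HG; by case: A HA.
  + move=> B HB; exact: reg_closed HA HG HB.
Qed.

Lemma all_In (A : Type) (P : pred A) (l : seq A) x : all P l -> List.In x l -> P x.
Proof. elim: l => //= a l IH /andP [Ha Hl] [<-|/IH]; auto. Qed.

Lemma crit01 (CN : Type) (cps : seq (CN * seq (dsym + CN))) r w :
  critshape cps -> gen (crit_grammar cps) r w ->
  (forall t, List.In (inl t) r -> is01 t) -> all is01 w.
Proof.
move=> Hcs Hg; induction Hg => Hr //=.
- rewrite Hr /=; [apply: IHHg => t' Ht'; apply: Hr; by right | by left].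
- have [w0 [ob [E [Hw Hob]]]] := Hcs _ _ H.
  rewrite all_cat IHHg1 ?IHHg2 //.
  + by move=> t Ht; apply: Hr; right.
  + rewrite E => t /In_cat [/In_map [t' [[<-] Ht']]|].
    * exact: all_In Hw Ht'.
    * by case: Hob => [->|[B ->]] [].
Qed.
Lemma eps_shape : critshape eps_cps.
Proof. move=> A r [[_ <-]|[]]; by exists [::], [::]; split => //; split => //; left. Qed.

Lemma eps_lang w : crit_lang eps_cps tt w -> w = [::].
Proof.
move=> H; have [rhs [Hin H']] := gen1_inv H.
case: Hin => [[E]|[]]; subst rhs; exact: gen_nil_inv H'.
Qed.

Lemma eps_nil : crit_lang eps_cps tt [::].
Proof. apply: (gen1 (rhs := [::])); [by left | exact: gen_nil]. Qed.

Section Chain.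
Variables (p : program) (CN : Type) (cps : seq (CN * seq (dsym + CN))) (cs : CN).
Hypothesis Hcs : critshape cps.
Notation G1 := (demand_grammar p cps cs).
Notation G2 := (demand_grammar p eps_cps tt).

Definition S12 := @sim_dg p CN unit (fun _ => tt) (fun _ => cs) cps cs eps_cps tt erefl erefl.

Lemma reg_eq c w : lang (MN G1) (NRel c, false) w <-> lang (MN G2) (NRel c, false) w.
Proof. exact: (lang_equiv S12 (A := NRel c)). Qed.

Definition ConcA (X : dnt unit) x := exists w s, x = w ++ s /\
  lang (MN G2) (X, false) w /\ crit_lang cps cs s.

Definition MotA (beta : seq (dsym + dnt CN * bool)) x :=
 (forall f, beta = [:: inr (NSig f, false)] -> ConcA (NSig f) x) /\
 (forall c, beta = [:: inr (ND c, false)] -> ConcA (ND c) x) /\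
 (forall c g, beta = [:: inr (NRel c, false); inr (NSig g, false)] ->
    exists w s, x = w ++ s /\
      gen (MN G2) [:: inr (NRel c, false); inr (NSig g, false)] w /\
      crit_lang cps cs s).

Lemma G12 X rhs : (forall c, X <> NCrit c) -> G1 X rhs ->
  G2 (hN (fun _ => tt) X) (map (smap (hN (fun _ => tt))) rhs).
Proof. exact: dg_map. Qed.

Lemma G21 (X : dnt unit) rhs : (forall c, X <> NCrit c) -> G2 X rhs ->
  G1 (hN (fun _ => cs) X) (map (smap (hN (fun _ => cs))) rhs).
Proof. exact: dg_map. Qed.

Lemma chainA beta x : gen (MN G1) beta x -> MotA beta x.
Proof.
move=> Hg; induction Hg.
- by split; [|split] => *.
- by split; [|split] => *.
- case: IHHg1 => [IH1a [IH1b IH1c]]; case: IHHg2 => [IH2a [IH2b IH2c]].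
  split; [|split].
  + move=> f [EA Er]; subst A r; rewrite (gen_nil_inv Hg2) cats0.
    have [_ [rhs0 [HG E]]] := MN_nonreg Hcs (X := NSig f) is_true_true H; subst rhs.
    case: (G_shape HG) => [[c E]|[Ef E]]; subst rhs0.
    * have [w [s [-> [Hw Hs]]]] := IH1b c erefl.
      exists w, s; split => //; split => //.
      apply: gen1 Hw; apply: (MN_nonreg_intro eps_shape (X := NSig f) (rhs := [:: inr (ND c)])) => //.
      exact: (G12 (X := NSig f) _ HG).
    * subst f; exists [::], w1; split => //; split; last exact: (proj1 (crit_equiv p cs Hcs cs w1) Hg1).
      apply: (gen1 (rhs := [:: inr (NCrit tt, false)])).
      - apply: (MN_nonreg_intro eps_shape (X := NSig None) (rhs := [:: inr (NCrit tt)])) => //.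
        exact: (G12 (X := NSig None) _ HG).
      - exact: (proj2 (crit_equiv p tt eps_shape tt [::]) eps_nil).
  + move=> c [EA Er]; subst A r; rewrite (gen_nil_inv Hg2) cats0.
    have [_ [rhs0 [HG E]]] := MN_nonreg Hcs (X := ND c) is_true_true H; subst rhs.
    have [g E] := G_shape HG; subst rhs0.
    have [w [s [-> [Hw Hs]]]] := IH1c c g erefl.
    exists w, s; split => //; split => //.
    apply: gen1 Hw.
    apply: (MN_nonreg_intro eps_shape (X := ND c) (rhs := [:: inr (NRel c); inr (NSig g)])) => //.
    exact: (G12 (X := ND c) _ HG).
  + move=> c g [EA Er]; subst A r.
    have [w [s [-> [Hw Hs]]]] := IH2a g erefl.
    exists (w1 ++ w), s; split; first by rewrite catA.
    split => //; apply: gen_cons1 Hw.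
    by apply/reg_eq; apply: gen1 H Hg1.
Qed.

Definition MotB (beta : seq (dsym + dnt unit * bool)) x :=
 (forall f, beta = [:: inr (NSig f, false)] -> forall s, crit_lang cps cs s ->
    lang (MN G1) (NSig f, false) (x ++ s)) /\
 (forall c, beta = [:: inr (ND c, false)] -> forall s, crit_lang cps cs s ->
    lang (MN G1) (ND c, false) (x ++ s)) /\
 (forall c g, beta = [:: inr (NRel c, false); inr (NSig g, false)] ->
    forall s, crit_lang cps cs s ->
    gen (MN G1) [:: inr (NRel c, false); inr (NSig g, false)] (x ++ s)).

Lemma chainB beta x : gen (MN G2) beta x -> MotB beta x.
Proof.
move=> Hg; induction Hg.
- by split; [|split] => *.
- by split; [|split] => *.
- case: IHHg1 => [IH1a [IH1b IH1c]]; case: IHHg2 => [IH2a [IH2b IH2c]].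
  split; [|split].
  + move=> f [EA Er] s Hs; subst A r; rewrite (gen_nil_inv Hg2) cats0.
    have [_ [rhs0 [HG E]]] := MN_nonreg eps_shape (X := NSig f) is_true_true H; subst rhs.
    case: (G_shape HG) => [[c E]|[Ef E]]; subst rhs0.
    * apply: gen1 (IH1b c erefl s Hs).
      apply: (MN_nonreg_intro Hcs (X := NSig f) (rhs := [:: inr (ND c)])) => //.
      exact: (G21 (X := NSig f) _ HG).
    * subst f.
      have := Hg1; rewrite -[gen _ _ _]/(lang _ _ _) => /(crit_equiv p tt eps_shape)/eps_lang ->.
      apply: (gen1 (rhs := [:: inr (NCrit cs, false)])).
      - apply: (MN_nonreg_intro Hcs (X := NSig None) (rhs := [:: inr (NCrit cs)])) => //.
        exact: (G21 (X := NSig None) _ HG).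
      - exact: (proj2 (crit_equiv p cs Hcs cs s) Hs).
  + move=> c [EA Er] s Hs; subst A r; rewrite (gen_nil_inv Hg2) cats0.
    have [_ [rhs0 [HG E]]] := MN_nonreg eps_shape (X := ND c) is_true_true H; subst rhs.
    have [g E] := G_shape HG; subst rhs0.
    apply: gen1 (IH1c c g erefl s Hs).
    apply: (MN_nonreg_intro Hcs (X := ND c) (rhs := [:: inr (NRel c); inr (NSig g)])) => //.
    exact: (G21 (X := ND c) _ HG).
  + move=> c g [EA Er] s Hs; subst A r.
    rewrite -catA; apply: gen_cons1 (IH2a g erefl s Hs).
    by apply/reg_eq; apply: gen1 H Hg1.
Qed.
End Chain.
Theorem mainTheorem4 (p : program) (Hwf : wf_program p)
  (CN : Type) (cps : seq (CN * seq (dsym + CN))) (cs : CN)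
  (Hcrit : slicing_criterion cps cs)
  (pi : label) (Hpi : pi \in expr_labels p) :
  (exists a, liftset Ssimp (M_lang p cps cs pi) a) <->
  inSlice p pi (crit_lang cps cs).
Proof.
have [Hcs Hpre] := Hcrit.
have Hcs' : critshape cps := Hcs.
have H01 : forall s, crit_lang cps cs s -> all is01 s.
  move=> s Hs; apply: (crit01 Hcs' Hs) => t [].
  - by [].
  - by [].
split.
- move=> [a [x [Hx Ha]]].
  have [w [s [Ex [Hw Hs]]]] := (chainA (p := p) Hcs' Hx).2.1 pi erefl.
  subst x; have [x' [Hc Hx']] := SC_A Ha.
  have [u [p0 [Ex' [Hu Hp]]]] := Ccan_form Hc; subst x'.
  rewrite -catA in Hx'.
  have [b Hb] := proj1 (Ssimp_plain (p0 ++ s) Hu) (ex_intro _ a Hx').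
  have Es := proj1 (Ssimp_bar b Hp (H01 _ Hs)) Hb.
  exists (revbar p0); split.
  + exists p0, u; split => //; split => //; split => //.
    by exists w.
  + by apply: Hpre Hs _; exists b.
- move=> [v [[p0 [u [Hp [Hu [[w [Hw Hc]] Ev]]]]] Hv]]; subst v.
  have Hx := (@chainB p CN cps cs Hcs' _ _ Hw).2.1 pi erefl _ Hv.
  have Hb : Ssimp (p0 ++ revbar p0) [::].
    by apply/(Ssimp_bar _ Hp (H01 _ Hv)); rewrite cats0.
  have [a Ha] := proj2 (Ssimp_plain (p0 ++ revbar p0) Hu) (ex_intro _ _ Hb).
  exists a, (w ++ revbar p0); split => //.
  by apply: SC_B Hc _; rewrite -catA.
Qed.
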